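(* For even $n$ and an alphabet $\Sigma$ with $|\Sigma|\ge n$, $\mathsf{maxPI}(\mathrm{Col})=\Theta(\sqrt{n})$.
   Context: The collision problem $\mathrm{Col}$ is the partial function on $S\subseteq\Sigma^n$ where $S$ consists of the positive inputs, $x=x_1\cdots x_n$ with all $x_i$ distinct ($\mathrm{Col}(x)=1$), and the negative inputs, $x$ such that for each $i$ there is exactly one $j\neq i$ with $x_i=x_j$ ($\mathrm{Col}(x)=0$). For $f:S\to\{0,1\}$, $S\subseteq\Sigma^n$, with $p=\{p_x:x\in S\}$ ranging over families of probability distributions on $[n]$, $$\mathsf{maxPI}(f)=\min_{p}\ \max_{x,y\in S:\ f(x)\neq f(y)} \frac{1}{\max_{i:\,x_i\neq y_i}\sqrt{p_x(i)p_y(i)}}.$$ *)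

(* Defs.v *)
From HB Require Import structures.
From mathcomp Require Import all_boot all_order all_algebra.
From mathcomp Require Import boolp classical_sets reals constructive_ereal ereal.
Set Implicit Arguments. Unset Strict Implicit. Unset Printing Implicit Defensive.
Import Order.TTheory GRing.Theory Num.Theory.
Local Open Scope ring_scope.
Local Open Scope classical_set_scope.

Definition input (n : nat) (Sigma : finType) := {ffun 'I_n -> Sigma}.

Definition is_distr (R : realType) (n : nat) (q : 'I_n -> R) : Prop :=
  (forall i, 0 <= q i) /\ \sum_(i < n) q i = 1.

(* 1 / max_{i : x_i <> y_i} sqrt(px(i) py(i)), in \bar R (= +oo when the max is 0). *)
Definition inv_overlap (R : realType) (n : nat) (Sigma : finType)
    (x y : input n Sigma) (px py : 'I_n -> R) : \bar R :=
  let m := \big[Num.max/0]_(i < n | x i != y i) Num.sqrt (px i * py i) in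
  if m == 0 then +oo%E else (m^-1)%:E.

Definition maxPI_obj (R : realType) (n : nat) (Sigma : finType)
    (S : input n Sigma -> bool) (f : input n Sigma -> bool)
    (p : input n Sigma -> 'I_n -> R) : \bar R :=
  ereal_sup [set v | exists x y, [/\ S x, S y, f x != f y &
                                    v = inv_overlap x y (p x) (p y)]].

Definition maxPI (R : realType) (n : nat) (Sigma : finType)
    (S : input n Sigma -> bool) (f : input n Sigma -> bool) : \bar R :=
  ereal_inf [set maxPI_obj S f p | p in
               [set p : input n Sigma -> 'I_n -> R |
                 forall x, S x -> is_distr (p x)]].

Definition col_pos (n : nat) (Sigma : finType) (x : input n Sigma) : bool :=
  [forall i : 'I_n, forall j : 'I_n, (x i == x j) ==> (i == j)].

Definition col_neg (n : nat) (Sigma : finType) (x : input n Sigma) : bool :=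
  [forall i : 'I_n, #|[set j : 'I_n | (j != i) && (x i == x j)]| == 1%N].

Definition col_dom (n : nat) (Sigma : finType) (x : input n Sigma) : bool :=
  col_pos x || col_neg x.

Definition Col (n : nat) (Sigma : finType) (x : input n Sigma) : bool := col_pos x.

(* Main.v *)
Require Import Defs.
From HB Require Import structures.
From mathcomp Require Import all_boot all_order all_algebra.
From mathcomp Require Import boolp classical_sets reals constructive_ereal ereal.
From mathcomp Require Import zify ring lra.
Import Order.TTheory GRing.Theory Num.Theory.
Local Open Scope ring_scope.


Lemma inv_overlap_sym (R : realType) n (Sigma : finType) (x y : input n Sigma) (px py : 'I_n -> R) :
  inv_overlap x y px py = inv_overlap y x py px.
Proof.
rewrite /inv_overlap.
rewrite (eq_bigl (fun i => y i != x i)); last by move=> i; rewrite eq_sym.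
by rewrite (eq_bigr (fun i => Num.sqrt (py i * px i))) // => i _; rewrite mulrC.
Qed.

Lemma inv_overlap_ge (R : realType) n (Sigma : finType) (x y : input n Sigma) (px py : 'I_n -> R) (B : R) :
  0 < B -> (forall i, x i != y i -> Num.sqrt (px i * py i) <= B) ->
  ((B^-1)%:E <= inv_overlap x y px py)%E.
Proof.
move=> B0 HB; rewrite /inv_overlap.
set m := \big[_/_]_(i | _) _.
case: eqP => [_|Hm]; first exact: leey.
have mB : m <= B.
  by apply: bigmax_le => //; exact: ltW.
have m0 : 0 <= m.
  by rewrite /m; elim/big_ind: _ => //= a b ha hb; rewrite le_max ha.
have mp : 0 < m by rewrite lt_def m0 andbT; apply/eqP.
by rewrite lee_fin lef_pV2 ?posrE.
Qed.

Lemma inv_overlap_le (R : realType) n (Sigma : finType) (x y : input n Sigma) (px py : 'I_n -> R) (B : R) d :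
  0 < B -> x d != y d -> B <= Num.sqrt (px d * py d) ->
  (inv_overlap x y px py <= (B^-1)%:E)%E.
Proof.
move=> B0 xd HB; rewrite /inv_overlap.
set m := \big[_/_]_(i | _) _.
have Bm : B <= m.
  apply: le_trans HB _; rewrite /m.
  exact: (le_bigmax_cond _ (fun i => Num.sqrt (px i * py i)) xd).
have mp : 0 < m by exact: lt_le_trans Bm.
rewrite (negbTE (lt0r_neq0 mp)).
by rewrite lee_fin lef_pV2 ?posrE.
Qed.

Lemma card_mkset (T : finType) (b : T -> bool) :
  #|[set j | b j]%classic| = #|[set j | b j]%SET|.
Proof. by apply: eq_card => j; rewrite inE; apply/idP/idP => [/set_mem|/mem_set]. Qed.

Lemma exists_inj n (Sigma : finType) : (n <= #|Sigma|)%N ->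
  exists x : input n Sigma, injective x.
Proof.
move=> H.
exists [ffun i => @enum_val Sigma predT (widen_ord H i)].
move=> i j; rewrite !ffunE => /enum_val_inj /(congr1 val) /= E.
exact: val_inj.
Qed.

Lemma pos_of_inj n (Sigma : finType) (x : input n Sigma) : injective x -> col_pos x.
Proof.
move=> xi; apply/forallP => i; apply/forallP => j; apply/implyP => /eqP /xi ->.
by [].
Qed.

Lemma pos_neg_excl n (Sigma : finType) (x : input n Sigma) (i0 : 'I_n) :
  col_pos x -> col_neg x -> False.
Proof.
move=> /forallP P /forallP /(_ i0) /eqP; rewrite card_mkset => C.
have : (0 < #|[set j : 'I_n | (j != i0) && (x i0 == x j)]|)%N by rewrite C.
case/card_gt0P => j; rewrite inE => /andP [ji0 xe].
have := P i0 => /forallP /(_ j); rewrite xe /= => /eqP E.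
by rewrite E eqxx in ji0.
Qed.

Lemma nat_pair (k a b : nat) : (a < k + k)%N -> (b < k + k)%N ->
  ((b != a) && ((if (a < k)%N then a + k else a)%N == (if (b < k)%N then b + k else b)%N))
  = (b == if (a < k)%N then (a + k)%N else (a - k)%N).
Proof.
move=> ha hb.
case: (ltnP a k) => ak; case: (ltnP b k) => bk;
  apply/idP/idP => [/andP [/eqP H1 /eqP H2]|/eqP H]; try (apply/eqP; lia);
  try (apply/andP; split; apply/eqP; lia).
Qed.

Lemma neg_construct n k (Sigma : finType) (x : input n Sigma) (small : pred 'I_n) :
  n = (k + k)%N -> (0 < k)%N -> injective x -> (k <= #|small|)%N ->
  exists y : input n Sigma, col_neg y /\ forall i, x i != y i -> small i.
Proof.
move=> nk k0 xinj ks.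
have n0 : (0 < n)%N by rewrite nk; lia.
pose i0 : 'I_n := Ordinal n0.
pose s := enum small ++ enum [predC small].
have size_s : size s = n.
  by rewrite size_cat -!cardE cardC card_ord.
have uniq_s : uniq s.
  rewrite cat_uniq !enum_uniq andbT /=.
  apply/hasPn => i; rewrite !mem_enum !inE => H; by [].
pose f (j : 'I_n) := nth i0 s j.
have finj : injective f.
  move=> a b /eqP; rewrite /f nth_uniq ?size_s // => /eqP E; exact: val_inj.
pose hi := invF finj.
pose G (a : 'I_n) : 'I_n := insubd a (if (a < k)%N then (a + k)%N else a).
pose P (a : 'I_n) : 'I_n := insubd a (if (a < k)%N then (a + k)%N else (a - k)%N).
have valG a : val (G a) = (if (a < k)%N then (a + k)%N else a).
  rewrite /G insubdK //; have := ltn_ord a; case: ifP; lia.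
have valP a : val (P a) = (if (a < k)%N then (a + k)%N else (a - k)%N).
  rewrite /P insubdK //; have := ltn_ord a; case: ifP; lia.
pose g i := f (G (hi i)).
exists [ffun i => x (g i)]; split.
- apply/forallP => i; rewrite card_mkset.
  rewrite (_ : [set j | _] = [set f (P (hi i))]) ?cards1 //.
  apply/setP => j; rewrite !inE !ffunE (inj_eq xinj) /g (inj_eq finj).
  move: (f_invF finj i) (f_invF finj j); rewrite -/hi.
  move: (hi i) (hi j) => a b <- <-.
  rewrite (inj_eq finj) (inj_eq finj).
  rewrite -!val_eqE /= valG valG valP.
  apply: nat_pair; rewrite -nk; exact: ltn_ord.
- move=> i; rewrite ffunE (inj_eq xinj) /g.
  rewrite -{1}(f_invF finj i) -/hi (inj_eq finj).
  rewrite -val_eqE /= valG.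
  case: ifP => hk; last by rewrite eqxx.
  move=> _.
  have <- : f (hi i) = i by exact: f_invF.
  rewrite /f /s nth_cat -cardE.
  have hk' : (hi i < #|small|)%N by apply: leq_trans ks.
  rewrite hk'.
  have : nth i0 (enum small) (hi i) \in enum small.
    by apply: mem_nth; rewrite -cardE.
  by rewrite mem_enum.
Qed.


Lemma lower (R : realType) n k (Sigma : finType) : n = (k + k)%N -> (0 < k)%N -> (n <= #|Sigma|)%N ->
  (((1/2 : R) * Num.sqrt (n%:R))%:E <= @maxPI R n Sigma (@col_dom n Sigma) (@Col n Sigma))%E.
Proof.
move=> nk k0 hs.
have n0 : (0 < n)%N by rewrite nk; lia.
have nR : (0 : R) < n%:R by rewrite ltr0n.
pose i0 : 'I_n := Ordinal n0.
apply: le_ereal_inf_tmp => _ [p Hp <-].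
have [x xinj] := @exists_inj _ _ hs.
have xpos := @pos_of_inj _ _ _ xinj.
have [ox1 ox2] := Hp x ltac:(by rewrite /col_dom xpos).
pose small i := p x i <= 2 / n%:R.
have hb : (#|[predC small]| * 2 <= n)%N.
  have : (#|[predC small]|%:R * (2 / n%:R) <= 1 :> R).
    rewrite -[X in _ <= X]ox2 (bigID small) /= -[X in X <= _]add0r lerD ?sumr_ge0 //.
    rewrite mulr_natl -sumr_const; apply: ler_sum => i.
    by rewrite inE /small -ltNge => /ltW.
  rewrite mulrA ler_pdivrMr // mul1r -natrM ler_nat //.
have ks : (k <= #|small|)%N.
  have := cardC small; rewrite card_ord; move: hb; set a := #|[predC small]|; set b := #|small|. move=> h1 h2; lia.
have [y [yneg ysm]] := @neg_construct _ _ _ _ _ nk k0 xinj ks.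
have [oy1 oy2] := Hp y ltac:(by rewrite /col_dom yneg orbT).
have py1 i : p y i <= 1.
  by rewrite -[X in _ <= X]oy2 (bigD1 i) //= lerDl sumr_ge0.
apply: (@le_trans _ _ ((Num.sqrt (2 / n%:R))^-1)%:E).
  rewrite lee_fin -sqrtrV ?divr_ge0 // invf_div.
  have -> : (1/2 : R) = Num.sqrt (1/4).
    rewrite (_ : (1/4 : R) = (1/2)^+2); last by field.
    by rewrite sqrtr_sqr ger0_norm.
  rewrite -sqrtrM; last by lra.
  apply: ler_wsqrtr; lra.
apply: (@le_trans _ _ (inv_overlap x y (p x) (p y))).
  apply: inv_overlap_ge; first by rewrite sqrtr_gt0 divr_gt0.
  move=> i /ysm si; apply: ler_wsqrtr.
  rewrite -[X in _ <= X]mulr1; apply: ler_pM => //.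
apply: ereal_sup_ubound; exists x, y; split => //.
- by rewrite /col_dom xpos.
- by rewrite /col_dom yneg orbT.
- rewrite /Col xpos; apply/negP => yp; exact: (@pos_neg_excl _ _ _ i0 yp yneg).
Qed.

Lemma sum_ind (R : realType) n (j : 'I_n) : \sum_(i < n) (((i == j) : nat)%:R : R) = 1.
Proof.
by rewrite (bigD1 j) //= eqxx big1 ?addr0 // => i /negbTE ->.
Qed.

Lemma upper (R : realType) n k (Sigma : finType) : n = (k + k)%N -> (0 < k)%N ->
  (@maxPI R n Sigma (@col_dom n Sigma) (@Col n Sigma) <=
     (Num.sqrt 2 * Num.sqrt (n%:R))%:E)%E.
Proof.
move=> nk k0.
have n0 : (0 < n)%N by rewrite nk; lia.
have nR : (0 : R) < n%:R by rewrite ltr0n.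
pose i0 : 'I_n := Ordinal n0.
pose partner (y : input n Sigma) := odflt i0 [pick j | (j != i0) && (y i0 == y j)].
pose p (y : input n Sigma) (i : 'I_n) : R :=
  if col_neg y then ((((i == i0) : nat)%:R + ((i == partner y) : nat)%:R) / 2)
  else 1 / n%:R.
have H1 : (@maxPI R n Sigma (@col_dom n Sigma) (@Col n Sigma) <= maxPI_obj (@col_dom n Sigma) (@Col n Sigma) p)%E.
  apply: ereal_inf_lbound; exists p => // x _; split.
  - move=> i; rewrite /p; case: ifP => _.
      by rewrite divr_ge0 // addr_ge0.
    by rewrite divr_ge0.
  - rewrite /p; case: (col_neg x).
      rewrite -mulr_suml big_split /= !sum_ind; lra.
    rewrite sumr_const card_ord div1r -[_ *+ n]mulr_natr mulVf //.
    by rewrite pnatr_eq0 -lt0n.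
have key x y : col_pos x -> col_neg y ->
    (inv_overlap x y (p x) (p y) <= (Num.sqrt 2 * Num.sqrt (n%:R))%:E)%E.
  move=> xpos yneg.
  set j := partner y.
  have hj : (j != i0) && (y i0 == y j).
    rewrite /j /partner; case: pickP => [j' //|none].
    move: yneg => /forallP /(_ i0) /eqP; rewrite card_mkset.
    by rewrite eq_card0 // => j'; rewrite inE none.
  case/andP: hj => ji0 /eqP yij.
  have xnn : col_neg x = false.
    by apply/negP => /(@pos_neg_excl _ _ _ i0 xpos).
  have pxd d : p x d = 1 / n%:R by rewrite /p xnn.
  have pyd i : p y i = (((i == i0) : nat)%:R + ((i == j) : nat)%:R) / 2.
    by rewrite /p yneg.
  have [d [dd pd]] : exists d, x d != y d /\ 1/2 <= p y d.
    case: (boolP (x i0 == y i0)) => h.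
    - exists j; split.
        apply/negP => /eqP xj.
        move: xpos => /forallP /(_ i0) /forallP /(_ j) /implyP.
        rewrite (eqP h) yij xj eqxx => /(_ isT) /eqP E.
        by rewrite E eqxx in ji0.
      rewrite pyd eqxx.
      have : (0 : R) <= ((j == i0) : nat)%:R by [].
      rewrite /=; lra.
    - exists i0; split => //.
      rewrite pyd eqxx.
      have : (0 : R) <= ((i0 == j) : nat)%:R by [].
      rewrite /=; lra.
  have -> : Num.sqrt 2 * Num.sqrt n%:R = (Num.sqrt (1 / (2 * n%:R)))^-1 :> R.
    rewrite -sqrtrV ?divr_ge0 ?mulr_ge0 // invf_div divr1 sqrtrM //.
  apply: (@inv_overlap_le R _ _ x y (p x) (p y) _ d) => //.
    by rewrite sqrtr_gt0 divr_gt0 // mulr_gt0.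
  apply: ler_wsqrtr; rewrite pxd.
  have -> : 1 / (2 * n%:R) = 1 / n%:R * (1/2 : R) by field; rewrite gt_eqF.
  by apply: ler_wpM2l => //; rewrite divr_ge0.
apply: le_trans H1 _; apply: ge_ereal_sup => _ [x [y [Sx Sy fxy ->]]].
move: fxy; rewrite /Col.
case/orP: Sx => hx; case/orP: Sy => hy.
- by rewrite hx hy.
- by move=> _; apply: key.
- by move=> _; rewrite inv_overlap_sym; apply: key.
- have nx : col_pos x = false by apply/negP => /(@pos_neg_excl _ _ _ i0) /(_ hx).
  have ny : col_pos y = false by apply/negP => /(@pos_neg_excl _ _ _ i0) /(_ hy).
  by rewrite nx ny.
Qed.


Theorem mainTheorem19 (R : realType) :
  exists c1 c2 : R, 0 < c1 /\ 0 < c2 /\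
    forall (n : nat) (Sigma : finType), ~~ odd n -> (0 < n)%N -> (n <= #|Sigma|)%N ->
      ((c1 * Num.sqrt (n%:R))%:E <= @maxPI R n Sigma (@col_dom n Sigma) (@Col n Sigma))%E /\
      (@maxPI R n Sigma (@col_dom n Sigma) (@Col n Sigma) <= (c2 * Num.sqrt (n%:R))%:E)%E.
Proof.
exists (1/2), (Num.sqrt 2); split; first lra.
split; first by rewrite sqrtr_gt0.
move=> n Sigma ev n0 hs.
have nk : n = (n./2 + n./2)%N by rewrite addnn even_halfK.
have k0 : (0 < n./2)%N by move: n0; rewrite {1}nk; lia.
split; [exact: (@lower R _ _ _ nk k0 hs) | exact: (@upper R _ _ Sigma nk k0)].
Qed.
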